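(* Let $m,n$ be positive integers. The number of $m\times n$ partial alternating sign matrices whose entries sum to $1$ is $\binom{m+n}{m}-1$.
   Context: An $m\times n$ partial alternating sign matrix is an $m\times n$ matrix with entries in $\{-1,0,1\}$ such that: the entries of each row and of each column sum to $0$ or $1$; the nonzero entries in each row and in each column alternate in sign; in each column the first (topmost) nonzero entry, if any, is $1$, and in each row the last (rightmost) nonzero entry, if any, is $1$. *)

(* Defs.v *)
From mathcomp Require Import all_boot all_order all_algebra.
Set Implicit Arguments. Unset Strict Implicit. Unset Printing Implicit Defensive.
Import Order.TTheory GRing.Theory Num.Theory.
Local Open Scope ring_scope.

Fixpoint alternating (s : seq int) : bool :=
  match s with
  | x :: ((y :: _) as t) => (y == - x) && alternating t
  | _ => true
  end.

Definition nonzeros (s : seq int) : seq int := [seq x <- s | x != 0].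

Definition row_seq (m n : nat) (A : 'M[int]_(m, n)) (i : 'I_m) : seq int :=
  [seq A i j | j <- enum 'I_n].
Definition col_seq (m n : nat) (A : 'M[int]_(m, n)) (j : 'I_n) : seq int :=
  [seq A i j | i <- enum 'I_m].

Definition pasm (m n : nat) (A : 'M[int]_(m, n)) : bool :=
  [forall i, forall j, (A i j == -1) || (A i j == 0) || (A i j == 1)] &&
  [forall i, let s := row_seq A i in
     ((\sum_(x <- s) x == 0) || (\sum_(x <- s) x == 1)) &&
     alternating (nonzeros s) &&
     ((nonzeros s == [::]) || (last 0 (nonzeros s) == 1))] &&
  [forall j, let s := col_seq A j in
     ((\sum_(x <- s) x == 0) || (\sum_(x <- s) x == 1)) &&
     alternating (nonzeros s) &&
     ((nonzeros s == [::]) || (head 0 (nonzeros s) == 1))].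

Definition entry_sum (m n : nat) (A : 'M[int]_(m, n)) : int :=
  \sum_(i < m) \sum_(j < n) A i j.

(* Main.v *)
Require Import Defs.
From mathcomp Require Import all_boot all_order all_algebra.
From mathcomp Require Import zify.
Set Implicit Arguments. Unset Strict Implicit. Unset Printing Implicit Defensive.
Import Order.TTheory GRing.Theory Num.Theory.
Local Open Scope ring_scope.

Definition u01 (x : int) := (x == 0) || (x == 1).
Definition ssum (s : seq int) := \sum_(x <- s) x.
Definition rowcond s := u01 (ssum s) && alternating (nonzeros s) &&
  ((nonzeros s == [::]) || (last 0 (nonzeros s) == 1)).
Definition colcond s := u01 (ssum s) && alternating (nonzeros s) &&
  ((nonzeros s == [::]) || (head 0 (nonzeros s) == 1)).
Fixpoint suf (s : seq int) : bool :=
  if s is x :: t then u01 (x + ssum t) && suf t else true.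

Lemma ssum_cons x t : ssum (x :: t) = x + ssum t.
Proof. by rewrite /ssum big_cons. Qed.
Lemma ssum_nil : ssum [::] = 0.
Proof. by rewrite /ssum big_nil. Qed.

Lemma suf_sum s : suf s -> u01 (ssum s).
Proof. by case: s => [|x t] /=; [rewrite ssum_nil | rewrite ssum_cons => /andP[]]. Qed.

Lemma ssum_nz s : ssum (nonzeros s) = ssum s.
Proof.
elim: s => //= x t IH; case: ifP => /= [_|/negbFE/eqP->];
by rewrite !ssum_cons IH // add0r.
Qed.

Lemma suf_nz s : suf (nonzeros s) = suf s.
Proof.
elim: s => //= x t IH; case: ifP => /= [_|/negbFE/eqP->].
  by rewrite ssum_nz IH.
rewrite add0r IH; case H: (suf t); last by rewrite andbF.
by rewrite andbT suf_sum.
Qed.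

Lemma alt_cons x y t : alternating [:: x, y & t] = (y == - x) && alternating (y :: t).
Proof. by []. Qed.

Lemma sufK y N : y != 0 -> suf (y :: N) ->
  (y == 1) && (ssum (y :: N) == 1) || (y == -1) && (ssum (y :: N) == 0).
Proof.
move=> ynz /= /andP[h1 /suf_sum h2]; rewrite ssum_cons; move: ynz h1 h2; rewrite /u01; lia.
Qed.

Lemma L1 N : all (fun x => x != 0) N -> suf N ->
  alternating N && ((N == [::]) || (last 0 N == 1)).
Proof.
elim: N => // x N IH /= /andP[xnz Hall] /andP[h1 h2].
case: N IH Hall h1 h2 => [|y N] IH Hall h1 h2.
  by move: h1 xnz; rewrite /= ssum_nil addr0 /u01; lia.
have /= := IH Hall h2; case/andP=> -> ->; rewrite andbT /=.
move: Hall => /andP[ynz _].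
move: (sufK ynz h2) h1 xnz; rewrite /u01; lia.
Qed.

Lemma L2 N : all (fun x => x != 0) N -> alternating N -> ((N == [::]) || (last 0 N == 1)) -> suf N.
Proof.
elim: N => // x N IH /= /andP[xnz Hall].
case: N IH Hall => [|y N] IH Hall.
  by move=> _ /= h; rewrite ssum_nil addr0 /u01 h orbT.
move=> /andP[hy ha] /= hl.
have hs : suf (y :: N) by apply: IH.
move: (hs) => /= ->; rewrite andbT.
move: Hall => /andP[ynz _].
move: (sufK ynz hs) hy; rewrite /u01 ssum_cons; lia.
Qed.

Lemma rowcondN N : all (fun x => x != 0) N ->
  (u01 (ssum N) && alternating N && ((N == [::]) || (last 0 N == 1))) = suf N.
Proof.
move=> Hall; apply/idP/idP.
  by case/andP=> /andP[_ h1] h2; apply: L2.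
by move=> h; rewrite suf_sum //= L1.
Qed.

Lemma rowcond_suf s : rowcond s = suf s.
Proof.
rewrite /rowcond -ssum_nz -suf_nz rowcondN //.
by apply/allP => x; rewrite mem_filter => /andP[].
Qed.

Lemma suf_drop s : suf s <-> forall k, u01 (ssum (drop k s)).
Proof.
elim: s => [|x t IH] /=; first by split => // _ k; rewrite ssum_nil.
split.
  case/andP=> h1 /IH h2 [|k] //=; by rewrite ssum_cons.
move=> H; apply/andP; split; first by move: (H 0%N); rewrite drop0 ssum_cons.
by apply/IH => k; apply: (H k.+1).
Qed.

Lemma suf_entries s : suf s -> all (fun x => (x == -1) || (x == 0) || (x == 1)) s.
Proof.
elim: s => //= x t IH /andP[h1 h2]; rewrite IH // andbT.
move: h1 (suf_sum h2); rewrite /u01; lia.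
Qed.

Lemma alt_path x t : alternating (x :: t) = path (fun a b => b == - a) x t.
Proof. by elim: t x => // y t IH x; rewrite alt_cons IH. Qed.

Lemma alt_rev N : alternating (rev N) = alternating N.
Proof.
case: N => // x t.
rewrite {1}lastI rev_rcons alt_path rev_path alt_path.
apply: eq_path => a b /=; by rewrite eq_sym -eqr_oppLR eq_sym.
Qed.

Lemma ssum_rev s : ssum (rev s) = ssum s.
Proof. by rewrite /ssum big_rev. Qed.

Lemma colcond_rev s : colcond s = rowcond (rev s).
Proof.
rewrite /colcond /rowcond ssum_rev /nonzeros filter_rev alt_rev.
congr (_ && _); case: (filter _ s) => //= x t.
by rewrite rev_cons last_rcons; case: (rev t).
Qed.

Lemma suf_take s : suf (rev s) <-> forall k, u01 (ssum (take k s)).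
Proof.
rewrite suf_drop; split => H k.
  have [le|lt] := leqP k (size s).
    by move: (H (size s - k)%N); rewrite drop_rev subKn // ssum_rev.
  by move: (H 0%N); rewrite drop0 ssum_rev take_oversize // ltnW.
by rewrite drop_rev ssum_rev.
Qed.

Lemma sum_enum n (F : 'I_n -> int) : \sum_(i <- enum 'I_n) F i = \sum_(i < n) F i.
Proof. by rewrite big_enum /=; apply: eq_bigl => i; rewrite inE. Qed.

Lemma pasmE m n (A : 'M[int]_(m, n)) : pasm A =
  [forall i, forall j, (A i j == -1) || (A i j == 0) || (A i j == 1)] &&
  [forall i, rowcond (row_seq A i)] && [forall j, colcond (col_seq A j)].
Proof. by []. Qed.

Definition cc m n (A : 'M[int]_(m, n)) k j := ssum (take k (col_seq A j)).
Definition rr m n (A : 'M[int]_(m, n)) i k := ssum (drop k (row_seq A i)).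

Lemma pasm_char m n (A : 'M[int]_(m, n)) :
  pasm A <-> (forall i k, u01 (rr A i k)) /\ (forall j k, u01 (cc A k j)).
Proof.
rewrite pasmE; split.
  case/andP=> /andP[_ /forallP hr] /forallP hc; split.
    by move=> i; apply/suf_drop; rewrite -rowcond_suf.
  by move=> j; apply/suf_take; rewrite -rowcond_suf -colcond_rev.
case=> hr hc; apply/andP; split; [apply/andP; split|].
- apply/forallP => i; apply/forallP => j.
  have hs : suf (row_seq A i) by apply/suf_drop; apply: hr.
  move/suf_entries/allP: hs => hs; apply: (hs (A i j)).
  by apply: map_f; rewrite mem_enum.
- by apply/forallP => i; rewrite rowcond_suf; apply/suf_drop; apply: hr.
- by apply/forallP => j; rewrite colcond_rev rowcond_suf; apply/suf_take; apply: hc.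
Qed.

Definition ind (b : bool) : int := if b then 1 else 0.
Definition tv m n (t : m.-tuple 'I_n.+1) (k : nat) : nat := val (nth ord0 t k).
Definition G m n (t : m.-tuple 'I_n.+1) (k j : nat) : int :=
  ind ((0 < k)%N && (tv t k.-1 == j.+1)).
Definition phi m n (t : m.-tuple 'I_n.+1) : 'M[int]_(m, n) :=
  \matrix_(i, j) (G t i.+1 j - G t i j).

Lemma tv_le m n (t : m.-tuple 'I_n.+1) k : (tv t k <= n)%N.
Proof. by rewrite /tv -ltnS ltn_ord. Qed.

Lemma ssum_take_S s k : ssum (take k.+1 s) = ssum (take k s) + nth 0 s k.
Proof.
elim: s k => [|x s IH] [|k] /=; rewrite ?ssum_nil ?ssum_cons ?addr0 //.
  by rewrite take0 ssum_nil addr0 add0r.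
by rewrite IH addrA.
Qed.

Lemma ssum_drop_eq s (g : nat -> int) :
  (forall k, (size s <= k)%N -> g k = 0) ->
  (forall k, (k < size s)%N -> g k = nth 0 s k + g k.+1) ->
  forall k, ssum (drop k s) = g k.
Proof.
elim: s g => [|x s IH] g h0 hS k.
  by rewrite ssum_nil h0.
have IH' := IH (fun k => g k.+1) (fun k hk => h0 k.+1 hk)
   (fun k hk => hS k.+1 hk).
case: k => [|k] /=; last exact: IH'.
by rewrite ssum_cons hS //= -(IH' 0%N) drop0.
Qed.

Lemma nth_col m n (A : 'M[int]_(m, n)) j (i : 'I_m) : nth 0 (col_seq A j) i = A i j.
Proof. by rewrite /col_seq (nth_map i) ?size_enum_ord ?nth_ord_enum. Qed.

Lemma nth_row m n (A : 'M[int]_(m, n)) i (j : 'I_n) : nth 0 (row_seq A i) j = A i j.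
Proof. by rewrite /row_seq (nth_map j) ?size_enum_ord ?nth_ord_enum. Qed.

Lemma size_col m n (A : 'M[int]_(m, n)) j : size (col_seq A j) = m.
Proof. by rewrite size_map size_enum_ord. Qed.

Lemma size_row m n (A : 'M[int]_(m, n)) i : size (row_seq A i) = n.
Proof. by rewrite size_map size_enum_ord. Qed.

Lemma cc_S m n (A : 'M[int]_(m, n)) (i : 'I_m) j : cc A i.+1 j = cc A i j + A i j.
Proof. by rewrite /cc ssum_take_S nth_col. Qed.

Lemma cc_phi m n (t : m.-tuple 'I_n.+1) k j : (k <= m)%N -> cc (phi t) k j = G t k j.
Proof.
elim: k => [|k IH] hk; first by rewrite /cc take0 ssum_nil.
rewrite (cc_S (phi t) (Ordinal hk) j) IH; last exact: ltnW.
by rewrite mxE addrC subrK.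
Qed.

Lemma ind_lt k v : ind (k < v)%N = ind (v == k.+1) + ind (k.+1 < v)%N.
Proof.
rewrite /ind; case: ifP => h1; case: ifP => h2; case: ifP => h3; lia.
Qed.

Lemma rr_phi m n (t : m.-tuple 'I_n.+1) (i : 'I_m) k :
  rr (phi t) i k = ind (k < tv t i)%N - ind ((0 < i)%N && (k < tv t i.-1)%N).
Proof.
rewrite /rr; move: k; apply: (@ssum_drop_eq _ (fun k => ind (k < tv t i)%N - ind ((0 < i)%N && (k < tv t i.-1)%N))) => k; rewrite size_row => hk.
  have h1 := tv_le t i; have h2 := tv_le t i.-1.
  by rewrite /= /ind; case: ifP => a; case: ifP => b; lia.
rewrite (nth_row (phi t) i (Ordinal hk)) mxE /G /ind.
case: (0 < i)%N; rewrite /= ?andTb ?andFb; repeat case: ifP => ?; lia.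
Qed.

Lemma ssum_col m n (A : 'M[int]_(m, n)) j : ssum (col_seq A j) = \sum_i A i j.
Proof. by rewrite /ssum /col_seq big_map sum_enum. Qed.

Lemma ssum_row m n (A : 'M[int]_(m, n)) i : ssum (row_seq A i) = \sum_j A i j.
Proof. by rewrite /ssum /row_seq big_map sum_enum. Qed.

Lemma cc_over m n (A : 'M[int]_(m, n)) k j : (m <= k)%N -> cc A k j = \sum_i A i j.
Proof. by move=> h; rewrite /cc take_oversize ?size_col // ssum_col. Qed.

Lemma rr0 m n (A : 'M[int]_(m, n)) i : rr A i 0 = \sum_j A i j.
Proof. by rewrite /rr drop0 ssum_row. Qed.

Lemma esum m n (A : 'M[int]_(m, n)) : entry_sum A = \sum_j cc A m j.
Proof.
rewrite /entry_sum exchange_big; apply: eq_bigr => j _; by rewrite cc_over.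
Qed.

Lemma sum_ind n v : \sum_(j < n) ind (v == j.+1) = ind ((0 < v) && (v <= n))%N.
Proof.
elim: n => [|n IH]; first by rewrite big_ord0 /ind; case: ifP => //; lia.
rewrite big_ord_recr /= IH /ind; repeat case: ifP => ?; lia.
Qed.

Lemma esum_phi m n (t : m.-tuple 'I_n.+1) : (0 < m)%N ->
  entry_sum (phi t) = ind (0 < tv t m.-1)%N.
Proof.
move=> hm; rewrite esum.
rewrite (eq_bigr (fun j : 'I_n => ind (tv t m.-1 == j.+1))); last first.
  by move=> j _; rewrite cc_phi // /G hm.
by rewrite sum_ind tv_le andbT.
Qed.

Lemma tv_tnth m n (t : m.-tuple 'I_n.+1) (i : 'I_m) : tv t i = val (tnth t i).
Proof. by rewrite /tv (tnth_nth ord0). Qed.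

Lemma sorted_tv m n (t : m.-tuple 'I_n.+1) :
  sorted leq (map val t) <-> forall i, (i.+1 < m)%N -> (tv t i <= tv t i.+1)%N.
Proof.
split.
  move/sortedP => h i hi; move: (h 0%N i); rewrite size_map size_tuple => /(_ hi).
  by rewrite !(nth_map ord0) ?size_tuple // ltnW.
move=> h; apply/(sortedP 0%N) => i; rewrite size_map size_tuple => hi.
by rewrite !(nth_map ord0) ?size_tuple // ?h // ltnW.
Qed.

Lemma sorted_tv_le m n (t : m.-tuple 'I_n.+1) : sorted leq (map val t) ->
  forall i d, (i + d < m)%N -> (tv t i <= tv t (i + d))%N.
Proof.
move/sorted_tv => h i; elim=> [|d IH] hd; first by rewrite addn0.
apply: leq_trans (IH _) _; first lia.
by rewrite addnS h // -addnS.
Qed.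

Lemma forward m n (t : m.-tuple 'I_n.+1) : (0 < m)%N -> sorted leq (map val t) ->
  (tv t m.-1 != 0)%N -> pasm (phi t) && (entry_sum (phi t) == 1).
Proof.
move=> hm hs hnz; apply/andP; split; last by rewrite esum_phi // /ind lt0n hnz.
apply/pasm_char; split.
- move=> i k; rewrite rr_phi.
  have hmono : (0 < i)%N -> (tv t i.-1 <= tv t i)%N.
    move=> hi; move/sorted_tv: hs => h; have := h i.-1; rewrite prednK //; apply.
    exact: ltn_ord.
  rewrite /u01 /ind; case: (0 < i)%N hmono => /= [/(_ isT)|_]; repeat case: ifP => ?; lia.
- move=> j k; have [hk|hk] := leqP k m.
    rewrite cc_phi // /G /ind /u01; case: ifP => _; [exact: orbT|exact: orTb].
  rewrite (cc_over _ _ (ltnW hk)) -(cc_over (phi t) j (leqnn m)) cc_phi // /G /ind /u01.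
  case: ifP => _; [exact: orbT|exact: orTb].
Qed.

Lemma backward m n (A : 'M[int]_(m, n)) : (0 < m)%N -> pasm A -> entry_sum A = 1 ->
  exists t : m.-tuple 'I_n.+1, [/\ sorted leq (map val t), (tv t m.-1 != 0)%N & A = phi t].
Proof.
move=> hm /pasm_char [hr hc] hsum.
pose C k := \sum_(j < n) cc A k j.
have Cge0 k : 0 <= C k.
  by apply: sumr_ge0 => j _; move: (hc j k); rewrite /u01; lia.
have CS k : C k <= C k.+1.
  rewrite /C /cc [X in _ <= X](eq_bigr _ (fun j _ => ssum_take_S _ _)).
  rewrite big_split /= lerDl.
  have [hk|hk] := ltnP k m.
    under eq_bigr do rewrite (nth_col A _ (Ordinal hk)).
    rewrite -rr0; move: (hr (Ordinal hk) 0%N); rewrite /u01; lia.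
  by rewrite big1 // => j _; rewrite nth_default // size_col.
have Cle k d : C k <= C (k + d)%N.
  elim: d => [|d IH]; first by rewrite addn0.
  by apply: le_trans IH _; rewrite addnS.
have Cm : C m = 1 by rewrite /C -esum.
have C1 k : (k <= m)%N -> C k <= 1.
  by move=> hk; rewrite -Cm -(subnKC hk); apply: Cle.
have uniq1 k j1 j2 : (k <= m)%N -> cc A k j1 = 1 -> cc A k j2 = 1 -> j1 = j2.
  move=> hk h1 h2; apply/eqP; apply/negP => /negP hne.
  have := C1 k hk; rewrite /C (bigD1 j1) //= (bigD1 j2) /=; last by rewrite eq_sym.
  rewrite h1 h2; set X := \sum_(_ < n | _) _.
  have : 0 <= X.
    by apply: sumr_ge0 => i _; move: (hc i k); rewrite /u01; lia.
  lia.
pose t : m.-tuple 'I_n.+1 :=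
  [tuple (if [pick j | cc A i.+1 j == 1] is Some j then inord j.+1 else ord0) | i < m].
have key (i : 'I_m) (j : 'I_n) : cc A i.+1 j = ind (tv t i == j.+1).
  rewrite tv_tnth tnth_mktuple; case: pickP => [j0 /eqP h0 | hno].
    rewrite /= inordK ?ltnS // eqSS /ind; case: ifP => [/eqP hj|hj].
      by have -> : j = j0 by apply: val_inj.
    move: (hc j i.+1); rewrite /u01 => /orP[/eqP //| /eqP h1].
    have := uniq1 _ _ _ (ltn_ord i) h0 h1 => hj0.
    by rewrite hj0 eqxx in hj.
  by move: (hc j i.+1) (hno j); rewrite /ind /u01 /=; case/orP => /eqP ->.
clearbody t.
have ccG k j : (k <= m)%N -> cc A k j = G t k j.
  case: k => [|k] hk; first by rewrite /cc take0 ssum_nil.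
  exact: (key (Ordinal hk)).
have hA : A = phi t.
  apply/matrixP => i j; rewrite mxE -(ccG _ _ (ltn_ord i)) -(ccG _ _ (ltnW (ltn_ord i))).
  by rewrite (cc_S A i j) addrC addKr.
exists t; split => //.
- apply/sorted_tv => i hi.
  have := hr (Ordinal hi) (tv t i).-1; rewrite hA rr_phi /=.
  move=> H; rewrite leqNgt; apply/negP => hlt; move: H.
  rewrite /u01 /ind; repeat case: ifP => ?; lia.
- have := esum_phi t hm; rewrite -hA hsum /ind; case: ifP => h H; first by rewrite -lt0n.
  by move: H; lia.
Qed.

Lemma phi_inj m n : injective (@phi m n).
Proof.
move=> t1 t2 h; apply: eq_from_tnth => i; apply: val_inj; rewrite /= -!tv_tnth.
have hj (j : 'I_n) : ind (tv t1 i == j.+1) = ind (tv t2 i == j.+1).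
  have := @cc_phi _ _ t1 i.+1 j (ltn_ord i); rewrite h (@cc_phi _ _ t2 i.+1 j (ltn_ord i)) /G /=.
  by move=> ->.
have h1 := tv_le t1 i; have h2 := tv_le t2 i.
case E1: (tv t1 i) h1 hj => [|v1] h1 hj.
  case E2: (tv t2 i) h2 => [|v2] h2 //.
  by have := hj (Ordinal h2); rewrite E2 /ind /= eqxx.
have := hj (Ordinal h1); rewrite /= eqxx /ind; case: ifP => // /eqP -> _.
by [].
Qed.

Lemma tv0 m n k : tv [tuple (@ord0 n) | i < m] k = 0%N.
Proof.
rewrite /tv; have [hk|hk] := ltnP k m.
  by rewrite -(tnth_nth ord0 _ (Ordinal hk)) tnth_mktuple.
by rewrite nth_default ?size_tuple.
Qed.

Lemma card_S' m n : (0 < m)%N ->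
  #|[set t : m.-tuple 'I_n.+1 | sorted leq (map val t) && (tv t m.-1 != 0)%N]| =
  ('C(m + n, m) - 1)%N.
Proof.
move=> hm.
pose t0 := [tuple (@ord0 n) | i < m].
have t0S : t0 \in [set t : m.-tuple 'I_n.+1 | sorted leq (map val t)].
  by rewrite inE; apply/sorted_tv => i _; rewrite !tv0.
have -> : [set t : m.-tuple 'I_n.+1 | sorted leq (map val t) && (tv t m.-1 != 0)%N] =
    [set t : m.-tuple 'I_n.+1 | sorted leq (map val t)] :\ t0.
  apply/setP => t; rewrite !inE.
  case hs: (sorted leq (map val t)); rewrite ?andbF ?andbT //.
  apply/idP/idP.
    by move=> hnz; apply/negP => /eqP ht; rewrite ht tv0 in hnz.
  move=> ht; apply: contra ht => /eqP h0; apply/eqP/eq_from_tnth => i.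
  apply: val_inj; rewrite -tv_tnth tnth_mktuple /=.
  have hi : (i + (m.-1 - i) < m)%N.
    by rewrite subnKC ?prednK // -ltnS prednK.
  have := sorted_tv_le hs hi; rewrite subnKC; last by rewrite -ltnS prednK.
  by rewrite h0 leqn0 => /eqP.
rewrite -(card_sorted_tuples m n) (cardsD1 t0 [set t : m.-tuple 'I_n.+1 | sorted leq (map val t)]) t0S.
by rewrite add1n subn1.
Qed.

Theorem corollary3p22 (m n : nat) (hm : (0 < m)%N) (hn : (0 < n)%N) :
  exists s : seq 'M[int]_(m, n),
    [/\ uniq s,
        (forall A : 'M[int]_(m, n), (A \in s) = pasm A && (entry_sum A == 1)) &
        size s = ('C(m + n, m) - 1)%N].
Proof.
exists (map (@phi m n) (enum [set t : m.-tuple 'I_n.+1 | sorted leq (map val t) && (tv t m.-1 != 0)%N])).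
split.
- by rewrite map_inj_uniq ?enum_uniq //; exact: phi_inj.
- move=> A; apply/idP/idP.
    case/mapP => t; rewrite mem_enum inE => /andP[hs hnz] ->.
    exact: forward.
  case/andP => hp /eqP he; have [t [hs hnz ->]] := backward hm hp he.
  by apply: map_f; rewrite mem_enum inE hs hnz.
- by rewrite size_map -cardE card_S'.
Qed.
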